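(* Over a $4$-letter alphabet there is no complete bifurcate tree; more precisely, there is no complete bifurcate tree over a $4$-letter alphabet containing words of length more than $6$ (and since every complete bifurcate tree contains arbitrarily long words, none exists at all).
   Context: A square is a nonempty word of the form $XX$; a word is square-free if it has no (contiguous) factor that is a square. For a word $W$ of length $n$ and $0\le i\le n$, let $P_i(W)$, $S_i(W)$ be the prefix and suffix of $W$ of length $i$; an extension of $W$ at position $i$ over alphabet $\mathcal{A}$ is a word $P_i(W)\mathtt{x}S_{n-i}(W)$ with $\mathtt{x}\in\mathcal{A}$. A square-free word of length $n$ is bifurcate over $\mathcal{A}$ if for each position $i\in\{0,\dots,n\}$ it has a square-free extension at position $i$. A bifurcate tree over $\mathcal{A}$ is a family of bifurcate words over $\mathcal{A}$ arranged as a rooted tree in which the children of a word $W$ are single-letter extensions of $W$ at pairwise different positions. It is complete if every word of length $n$ in it has exactly $n+1$ children (one extension at each position $0,\dots,n$). *)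

(* Defs.v *)
From Stdlib Require Import Relations.
From mathcomp Require Import all_boot.
Set Implicit Arguments. Unset Strict Implicit. Unset Printing Implicit Defensive.

Section Words.
Variable A : eqType.

Definition has_square (w : seq A) : Prop :=
  exists (u x v : seq A), x <> [::] /\ w = u ++ x ++ x ++ v.

Definition square_free (w : seq A) : Prop := ~ has_square w.

Definition extension (w : seq A) (i : nat) (a : A) : seq A :=
  take i w ++ a :: drop i w.

(* bifurcate over the alphabet A (the whole type A is the alphabet) *)
Definition bifurcate (w : seq A) : Prop :=
  square_free w /\
  forall i, i <= size w -> exists a : A, square_free (extension w i a).

(* A bifurcate tree: nodes of type V, root [root], word labels [lab],
   child relation [child u v] ("v is a child of u"), and [pos v] the
   position at which the child v extends its parent. *)
Definition bifurcate_tree (V : Type) (root : V) (lab : V -> seq A)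
    (child : V -> V -> Prop) (pos : V -> nat) : Prop :=
  (
      (forall v, ~ child v root) /\
      (forall u1 u2 v, child u1 v -> child u2 v -> u1 = u2) /\
      (forall v, clos_refl_trans V child root v)) /\
      (forall v, bifurcate (lab v)) /\
      (forall u v, child u v ->
         pos v <= size (lab u) /\ exists a : A, lab v = extension (lab u) (pos v) a) /\
      (forall u v1 v2, child u v1 -> child u v2 -> pos v1 = pos v2 -> v1 = v2).

(* complete: each word of length n has an extension child at each position
   0..n; together with the above, exactly n+1 children. *)
Definition complete_bifurcate_tree (V : Type) (root : V) (lab : V -> seq A)
    (child : V -> V -> Prop) (pos : V -> nat) : Prop :=
  bifurcate_tree root lab child pos /\
  forall u i, i <= size (lab u) -> exists v, child u v /\ pos v = i.

End Words.

(* Main.v *)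
Require Import Defs.
From mathcomp Require Import all_boot.
From mathcomp Require Import zify.
Set Implicit Arguments. Unset Strict Implicit. Unset Printing Implicit Defensive.

Definition has_sqb (T : eqType) (w : seq T) : bool :=
  has (fun s => has (fun l => [&& 0 < l, s + l + l <= size w &
        take l (drop s w) == take l (drop (s + l) w)]) (iota 0 (size w).+1))
    (iota 0 (size w).+1).

Lemma has_sqbP (T : eqType) (w : seq T) : has_sqb w -> has_square w.
Proof.
case/hasP => s _ /hasP [l _ /and3P [Hl Hs /eqP He]].
exists (take s w), (take l (drop s w)), (drop l (drop (s + l) w)); split.
  apply/eqP; rewrite -size_eq0 size_takel -?lt0n // size_drop; lia.
rewrite {2}He cat_take_drop -addnC -drop_drop.
by rewrite !cat_take_drop.
Qed.

Fixpoint allb (p : nat -> bool) (s : seq nat) : bool :=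
  if s is x :: s' then (if p x then allb p s' else false) else true.
Fixpoint hasb (p : nat -> bool) (s : seq nat) : bool :=
  if s is x :: s' then (if p x then true else hasb p s') else false.

Lemma allbE p s : allb p s = all p s.
Proof. by elim: s => //= x s ->; case: (p x). Qed.
Lemma hasbE p s : hasb p s = has p s.
Proof. by elim: s => //= x s ->; case: (p x). Qed.

Fixpoint Tb (d : nat) (w : seq nat) : bool :=
  if has_sqb w then false else
  match d with
  | 0 => true
  | d'.+1 => allb (fun i => hasb (fun a => Tb d' (extension w i a)) (iota 0 4))
               (iota 0 (size w).+1)
  end.

Fixpoint TA (T : eqType) (d : nat) (w : seq T) : Prop :=
  square_free w /\ match d with
                  | 0 => True
                  | d'.+1 => forall i, i <= size w -> exists a, TA d' (extension w i a)
                  end.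

Lemma Tb_S d w : Tb d.+1 w = ~~ has_sqb w &&
  all (fun i => has (fun a => Tb d (extension w i a)) (iota 0 4)) (iota 0 (size w).+1).
Proof. rewrite [LHS]/= allbE; case: has_sqb => //=; apply: eq_all => i; exact: hasbE. Qed.
Lemma Tb_0 w : Tb 0 w = ~~ has_sqb w.
Proof. by rewrite /=; case: has_sqb. Qed.

Lemma TA_map (T : eqType) (f : T -> nat) (finj : injective f) (fb : forall a, f a < 4) :
  forall d w, TA d w -> Tb d (map f w).
Proof.
elim=> [|d IH] w [Hsq H].
  rewrite Tb_0; apply/negP => Hh; apply: Hsq; apply: has_sqbP.
  move: Hh; rewrite /has_sqb size_map; apply: sub_has => s; apply: sub_has => l.
  by rewrite -!map_drop -!map_take (inj_eq (inj_map finj)).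
rewrite Tb_S; apply/andP; split.
  apply/negP => Hh; apply: Hsq; apply: has_sqbP.
  move: Hh; rewrite /has_sqb size_map; apply: sub_has => s; apply: sub_has => l.
  by rewrite -!map_drop -!map_take (inj_eq (inj_map finj)).
apply/allP => i; rewrite mem_iota size_map add0n ltnS => Hi.
have [a Ha] := H i Hi.
apply/hasP; exists (f a); first by rewrite mem_iota fb.
have := IH _ Ha.
by rewrite /extension map_cat /= map_take map_drop.
Qed.

Lemma sqf_factor (T : eqType) (x u y : seq T) :
  square_free (x ++ u ++ y) -> square_free u.
Proof.
move=> H [p [z [q [Hz E]]]]; apply: H.
exists (x ++ p), z, (q ++ y); split => //.
by rewrite E !catA.
Qed.

Lemma ext_at (T : eqType) (p q : seq T) a :
  extension (p ++ q) (size p) a = p ++ a :: q.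
Proof. by rewrite /extension take_size_cat // drop_size_cat. Qed.

Lemma TA_factor (T : eqType) d : forall (x u y : seq T), TA d (x ++ u ++ y) -> TA d u.
Proof.
elim: d => [|d IH] x u y [Hsq H].
  by split => //; apply: sqf_factor Hsq.
split; first by apply: sqf_factor Hsq.
move=> j Hj.
have Hs : size (x ++ take j u) = size x + j by rewrite size_cat size_takel.
have Hle : size x + j <= size (x ++ u ++ y).
  by rewrite !size_cat leq_add2l; apply: leq_trans Hj (leq_addr _ _).
have [a Ha] := H (size x + j) Hle.
exists a; apply: (IH x _ y).
have E : x ++ u ++ y = (x ++ take j u) ++ (drop j u ++ y).
  by rewrite -!catA -[in LHS](cat_take_drop j u) -catA.
move: Ha; rewrite -Hs E ext_at.
by rewrite /extension -!catA /=.
Qed.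

Lemma no_tree (A : finType) (hA : #|A| = 4) (V : Type) (root : V) (lab : V -> seq A)
  (child : V -> V -> Prop) (pos : V -> nat) :
  ~ complete_bifurcate_tree root lab child pos.
Proof.
move=> [[_ [Hbif [Hch _]]] Hcomp].
have node : forall d v, TA d (lab v).
  elim=> [|d IH] v; (split; [exact: (Hbif v).1|]); first done.
  move=> i Hi; have [u [Hu Hp]] := Hcomp v i Hi.
  have [_ [a Ha]] := Hch v u Hu.
  by exists a; rewrite -Hp -Ha.
have H0 : TA 7 ([::] : seq A).
  by apply: (TA_factor (x := [::]) (y := lab root)); exact: node.
pose f := fun a : A => nat_of_ord (enum_rank a).
have finj : injective f by move=> a b /val_inj /enum_rank_inj.
have fb : forall a, f a < 4 by move=> a; rewrite -hA /f ltn_ord.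
have Hf : Tb 7 [::] = false by vm_compute.
have := TA_map finj fb H0; change (map f [::]) with ([::] : seq nat); by rewrite Hf.
Qed.

Theorem mainTheorem7 (A : finType) (hA : #|A| = 4) :
  (forall (V : Type) (root : V) (lab : V -> seq A) (child : V -> V -> Prop)
          (pos : V -> nat),
     complete_bifurcate_tree root lab child pos -> forall v, size (lab v) <= 6)
  /\
  (forall (V : Type) (root : V) (lab : V -> seq A) (child : V -> V -> Prop)
          (pos : V -> nat),
     ~ complete_bifurcate_tree root lab child pos).
Proof.
split.
  move=> V root lab child pos H; exfalso; exact: (no_tree hA H).
move=> V root lab child pos H; exact: (no_tree hA H).
Qed.
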